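(* Let $\mathcal{C}_2=\mathbb{C}\{e_1,e_2\}$ be the complex algebra with basis $1,e_1,e_2,e_{12}=e_1e_2$, where $e_1^2=e_2^2=-1$, $e_1e_2=-e_2e_1$. For $A=A_0+A_1e_1+A_2e_2+A_3e_{12}\in\mathcal{C}_2^{m\times n}$ with $A_j\in\mathbb{C}^{m\times n}$, define $$\Phi_2(A)=\begin{pmatrix}A_0+A_1i & -(A_2+A_3i)\\ A_2-A_3i & A_0-A_1i\end{pmatrix}\in\mathbb{C}^{2m\times2n},$$ and $A^{\#}=A_0^*-A_1^*e_1-A_2^*e_2-A_3^*e_{12}$ (with $^*$ the conjugate transpose). Let $A,B\in\mathcal{C}_2^{m\times n}$, $C\in\mathcal{C}_2^{n\times p}$, $\lambda\in\mathbb{C}$. Then: (a) $A=B$ iff $\Phi_2(A)=\Phi_2(B)$; (b) $\Phi_2(A+B)=\Phi_2(A)+\Phi_2(B)$; (c) $\Phi_2(AC)=\Phi_2(A)\Phi_2(C)$, $\Phi_2(\lambda A)=\lambda\Phi_2(A)$, $\Phi_2(I_m)=I_{2m}$; (d) $\Phi_2(A^{\#})=\Phi_2(A)^*$; (e) $A=\frac14\,[(1-ie_1)I_m,\ (e_2+ie_{12})I_m]\,\Phi_2(A)\,[(1-ie_1)I_n,\ (-e_2+ie_{12})I_n]^T$; (f) if $m=n$: $A$ is invertible iff $\Phi_2(A)$ is invertible, in which case $\Phi_2(A^{-1})=\Phi_2(A)^{-1}$; (g) if $m=n$: $p_A(A)=0$, where $p_A(\lambda)=\det[\lambda I_{2m}-\Phi_2(A)]$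 is the characteristic polynomial of $\Phi_2(A)$; (h) for square $A,B\in\mathcal{C}_2^{m\times m}$: there exists an invertible $X\in\mathcal{C}_2^{m\times m}$ with $AX=XB$ iff $\Phi_2(A)$ and $\Phi_2(B)$ are similar over $\mathbb{C}$.
   Context: $i$ is the imaginary unit of $\mathbb{C}$, commuting with all elements of $\mathcal{C}_2$. In (g), the complex polynomial $p_A$ is evaluated at the matrix $A$ over $\mathcal{C}_2$ in the usual way. *)

(* Defs.v *)
(* C = R[i] (complex numbers over a real type R; for R the reals this is ℂ). *)
From HB Require Import structures.
From mathcomp Require Import all_boot all_order all_algebra.
From mathcomp Require Import reals.
From mathcomp Require Import complex.
From mathcomp Require Import ring.

Set Implicit Arguments.
Unset Strict Implicit.
Unset Printing Implicit Defensive.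

Import Order.TTheory GRing.Theory Num.Theory.
Local Open Scope ring_scope.

(* The Clifford algebra C_2 = C{e1,e2}: elements a0 + a1 e1 + a2 e2 + a3 e12
   with coefficients in C, e1^2 = e2^2 = -1, e1 e2 = - e2 e1 = e12. *)
Record C2 (R : realType) := MkC2 { c2_0 : R[i]; c2_1 : R[i]; c2_2 : R[i]; c2_3 : R[i] }.

Section C2Ring.
Variable R : realType.
Local Notation C := R[i].
Local Notation C2 := (C2 R).

Definition C2_to (x : C2) : C * C * C * C := (c2_0 x, c2_1 x, c2_2 x, c2_3 x).
Definition C2_of (t : C * C * C * C) : C2 :=
  let: (a, b, c, d) := t in MkC2 a b c d.
Lemma C2_toK : cancel C2_to C2_of. Proof. by case. Qed.

HB.instance Definition _ := Equality.copy C2 (can_type C2_toK).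
HB.instance Definition _ := Choice.copy C2 (can_type C2_toK).

Definition C2zero : C2 := MkC2 0 0 0 0.
Definition C2add (x y : C2) : C2 :=
  MkC2 (c2_0 x + c2_0 y) (c2_1 x + c2_1 y) (c2_2 x + c2_2 y) (c2_3 x + c2_3 y).
Definition C2opp (x : C2) : C2 := MkC2 (- c2_0 x) (- c2_1 x) (- c2_2 x) (- c2_3 x).

Lemma C2addA : associative C2add.
Proof. by case=> ? ? ? ?[? ? ? ?][? ? ? ?]; rewrite /C2add /=; congr MkC2; apply: addrA. Qed.
Lemma C2addC : commutative C2add.
Proof. by case=> ? ? ? ?[? ? ? ?]; rewrite /C2add /=; congr MkC2; apply: addrC. Qed.
Lemma C2add0 : left_id C2zero C2add.
Proof. by case=> ? ? ? ?; rewrite /C2add /=; congr MkC2; apply: add0r. Qed.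
Lemma C2addN : left_inverse C2zero C2opp C2add.
Proof. by case=> ? ? ? ?; rewrite /C2add /=; congr MkC2; apply: addNr. Qed.

HB.instance Definition _ := GRing.isZmodule.Build C2 C2addA C2addC C2add0 C2addN.

Lemma C2addE (x y : C2) : x + y = C2add x y. Proof. by []. Qed.

Definition C2one : C2 := MkC2 1 0 0 0.
(* product following the multiplication table of 1, e1, e2, e12 *)
Definition C2mul (x y : C2) : C2 :=
  let: MkC2 a0 a1 a2 a3 := x in let: MkC2 b0 b1 b2 b3 := y in
  MkC2 (a0 * b0 - a1 * b1 - a2 * b2 - a3 * b3)
       (a0 * b1 + a1 * b0 + a2 * b3 - a3 * b2)
       (a0 * b2 + a2 * b0 - a1 * b3 + a3 * b1)
       (a0 * b3 + a3 * b0 + a1 * b2 - a2 * b1).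

Lemma C2mulA : associative C2mul.
Proof. by case=> ? ? ? ?[? ? ? ?][? ? ? ?]; rewrite /C2mul; congr MkC2; ring. Qed.
Lemma C2mul1 : left_id C2one C2mul.
Proof. by case=> ? ? ? ?; rewrite /C2mul; congr MkC2; ring. Qed.
Lemma C2mulr1 : right_id C2one C2mul.
Proof. by case=> ? ? ? ?; rewrite /C2mul; congr MkC2; ring. Qed.
Lemma C2mulDl : left_distributive C2mul +%R.
Proof. by case=> ? ? ? ?[? ? ? ?][? ? ? ?]; rewrite !C2addE /C2add /C2mul /=; congr MkC2; ring. Qed.
Lemma C2mulDr : right_distributive C2mul +%R.
Proof. by case=> ? ? ? ?[? ? ? ?][? ? ? ?]; rewrite !C2addE /C2add /C2mul /=; congr MkC2; ring. Qed.
Lemma C2one_neq0 : C2one != 0.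
Proof.
apply/eqP=> /(congr1 (@c2_0 R)) /= /eqP; by rewrite oner_eq0.
Qed.

HB.instance Definition _ := GRing.Zmodule_isNzRing.Build C2
  C2mulA C2mul1 C2mulr1 C2mulDl C2mulDr C2one_neq0.

End C2Ring.

Section C2Defs.
Variable R : realType.
Local Notation C := R[i].
Local Notation C2 := (C2 R).

Definition inC2 (l : C) : C2 := MkC2 l 0 0 0.
Definition e1 : C2 := MkC2 0 1 0 0.
Definition e2 : C2 := MkC2 0 0 1 0.
Definition e12 : C2 := MkC2 0 0 0 1.

Definition scaleC2mx {m n} (l : C) (A : 'M[C2]_(m, n)) : 'M[C2]_(m, n) :=
  map_mx (fun x => inC2 l * x) A.

Definition mxC2 {m n} (M : 'M[C]_(m, n)) : 'M[C2]_(m, n) := map_mx inC2 M.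

(* component matrices: A = A0 + A1 e1 + A2 e2 + A3 e12 *)
Definition cmp0 {m n} (A : 'M[C2]_(m, n)) : 'M[C]_(m, n) := map_mx (@c2_0 R) A.
Definition cmp1 {m n} (A : 'M[C2]_(m, n)) : 'M[C]_(m, n) := map_mx (@c2_1 R) A.
Definition cmp2 {m n} (A : 'M[C2]_(m, n)) : 'M[C]_(m, n) := map_mx (@c2_2 R) A.
Definition cmp3 {m n} (A : 'M[C2]_(m, n)) : 'M[C]_(m, n) := map_mx (@c2_3 R) A.

Definition ctrmx {m n} (M : 'M[C]_(m, n)) : 'M[C]_(n, m) := (map_mx (@conjc R) M)^T.

Definition Phi2 {m n} (A : 'M[C2]_(m, n)) : 'M[C]_(m + m, n + n) :=
  block_mx (cmp0 A + 'i *: cmp1 A) (- (cmp2 A + 'i *: cmp3 A))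
           (cmp2 A - 'i *: cmp3 A) (cmp0 A - 'i *: cmp1 A).

Definition sharp {m n} (A : 'M[C2]_(m, n)) : 'M[C2]_(n, m) :=
  \matrix_(i, j) MkC2 (ctrmx (cmp0 A) i j) (- ctrmx (cmp1 A) i j)
                      (- ctrmx (cmp2 A) i j) (- ctrmx (cmp3 A) i j).

Definition C2invertible {n} (A : 'M[C2]_n) : Prop :=
  exists X : 'M[C2]_n, A *m X = 1%:M /\ X *m A = 1%:M.

Definition C2poly_eval {n} (p : {poly C}) (A : 'M[C2]_n) : 'M[C2]_n :=
  \sum_(k < size p) scaleC2mx p`_k (A ^+ k).

End C2Defs.

(* Main.v *)
Require Import Defs.
From HB Require Import structures.
From mathcomp Require Import all_boot all_order all_algebra.
From mathcomp Require Import reals complex ring.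

Set Implicit Arguments.
Unset Strict Implicit.
Unset Printing Implicit Defensive.
Import Order.TTheory GRing.Theory Num.Theory.
Local Open Scope ring_scope.

Section H.
Variable R : realType.
Local Notation C := R[i].
Local Notation C2 := (C2 R).

Lemma hi : 'i * 'i = -1 :> C.
Proof. by rewrite -expr2 -complexiE sqr_i. Qed.

Lemma c2_0_sum I (r : seq I) (P : pred I) (F : I -> C2) :
  c2_0 (\sum_(k <- r | P k) F k) = \sum_(k <- r | P k) c2_0 (F k).
Proof. by apply: (big_morph (@c2_0 R)). Qed.
Lemma c2_1_sum I (r : seq I) (P : pred I) (F : I -> C2) :
  c2_1 (\sum_(k <- r | P k) F k) = \sum_(k <- r | P k) c2_1 (F k).
Proof. by apply: (big_morph (@c2_1 R)). Qed.
Lemma c2_2_sum I (r : seq I) (P : pred I) (F : I -> C2) :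
  c2_2 (\sum_(k <- r | P k) F k) = \sum_(k <- r | P k) c2_2 (F k).
Proof. by apply: (big_morph (@c2_2 R)). Qed.
Lemma c2_3_sum I (r : seq I) (P : pred I) (F : I -> C2) :
  c2_3 (\sum_(k <- r | P k) F k) = \sum_(k <- r | P k) c2_3 (F k).
Proof. by apply: (big_morph (@c2_3 R)). Qed.

Lemma eq_blk m n (M N : 'M[C]_(m + m, n + n)) :
  (forall i j, M (lshift m i) (lshift n j) = N (lshift m i) (lshift n j)) ->
  (forall i j, M (lshift m i) (rshift n j) = N (lshift m i) (rshift n j)) ->
  (forall i j, M (rshift m i) (lshift n j) = N (rshift m i) (lshift n j)) ->
  (forall i j, M (rshift m i) (rshift n j) = N (rshift m i) (rshift n j)) ->
  M = N.
Proof.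
move=> h1 h2 h3 h4; rewrite -[M]submxK -[N]submxK.
by congr block_mx; apply/matrixP=> i j; rewrite !mxE.
Qed.

Fact Phi2L_key : unit. Proof. exact: tt. Qed.
Definition Phi2L m n : 'M[C2]_(m, n) -> 'M[C]_(m + m, n + n) :=
  locked_with Phi2L_key (@Phi2 R m n).
Arguments Phi2L {m n}.
Lemma Phi2LE m n : @Phi2L m n = @Phi2 R m n.
Proof. by rewrite /Phi2L; case: Phi2L_key. Qed.

Section E.
Variables (m n : nat) (A : 'M[C2]_(m, n)) (i : 'I_m) (j : 'I_n).
Lemma Phi2_ul : Phi2L A (lshift m i) (lshift n j) = c2_0 (A i j) + 'i * c2_1 (A i j).
Proof. by rewrite Phi2LE /Phi2 block_mxEul !mxE. Qed.
Lemma Phi2_ur : Phi2L A (lshift m i) (rshift n j) = - (c2_2 (A i j) + 'i * c2_3 (A i j)).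
Proof. by rewrite Phi2LE /Phi2 block_mxEur !mxE. Qed.
Lemma Phi2_dl : Phi2L A (rshift m i) (lshift n j) = c2_2 (A i j) - 'i * c2_3 (A i j).
Proof. by rewrite Phi2LE /Phi2 block_mxEdl !mxE. Qed.
Lemma Phi2_dr : Phi2L A (rshift m i) (rshift n j) = c2_0 (A i j) - 'i * c2_1 (A i j).
Proof. by rewrite Phi2LE /Phi2 block_mxEdr !mxE. Qed.
End E.

Definition Psi m n (M : 'M[C]_(m + m, n + n)) : 'M[C2]_(m, n) :=
  \matrix_(i, j)
    MkC2 ((M (lshift m i) (lshift n j) + M (rshift m i) (rshift n j)) / 2%:R)
         ((M (lshift m i) (lshift n j) - M (rshift m i) (rshift n j)) * (- 'i) / 2%:R)
         ((M (rshift m i) (lshift n j) - M (lshift m i) (rshift n j)) / 2%:R)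
         ((M (rshift m i) (lshift n j) + M (lshift m i) (rshift n j)) * 'i / 2%:R).

Lemma two_neq0 : (2%:R : C) != 0. Proof. by rewrite pnatr_eq0. Qed.

Lemma PsiK m n (A : 'M[C2]_(m, n)) : Psi (Phi2L A) = A.
Proof.
apply/matrixP=> i j; rewrite mxE Phi2_ul Phi2_ur Phi2_dl Phi2_dr.
have h2 := two_neq0; have := hi.
case: (A i j) => a b c d /= hi; congr MkC2; by field: hi.

Qed.

Lemma Psi_Phi2 m n (M : 'M[C]_(m + m, n + n)) : Phi2L (Psi M) = M.
Proof.
have h2 := two_neq0; have := hi => hi.
by apply: eq_blk => i j; rewrite ?Phi2_ul ?Phi2_ur ?Phi2_dl ?Phi2_dr mxE /=; by field: hi.
Qed.

Lemma Phi2_inj m n : injective (@Phi2L m n).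
Proof. by move=> A B h; rewrite -(PsiK A) h PsiK. Qed.


Lemma Phi2_def m n (A : 'M[C2]_(m, n)) : Phi2L A = block_mx (cmp0 A + 'i *: cmp1 A) (- (cmp2 A + 'i *: cmp3 A)) (cmp2 A - 'i *: cmp3 A) (cmp0 A - 'i *: cmp1 A).
Proof. by rewrite Phi2LE. Qed.
Lemma addE (T : nmodType) p q (M N : 'M[T]_(p, q)) x y : (M + N) x y = M x y + N x y.
Proof. by rewrite mxE. Qed.
Lemma scaleE p q (M : 'M[C]_(p, q)) (a : C) x y : (a *: M) x y = a * M x y.
Proof. by rewrite mxE. Qed.
Lemma Phi2D m n (A B : 'M[C2]_(m, n)) : Phi2L (A + B) = Phi2L A + Phi2L B.
Proof.
by apply: eq_blk => i j; rewrite addE ?Phi2_ul ?Phi2_ur ?Phi2_dl ?Phi2_dr addE;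
  case: (A i j) => ????; case: (B i j) => ????; rewrite /=; ring.
Qed.

Lemma Phi2Z m n l (A : 'M[C2]_(m, n)) : Phi2L (scaleC2mx l A) = l *: Phi2L A.
Proof.
by apply: eq_blk => i j; rewrite scaleE ?Phi2_ul ?Phi2_ur ?Phi2_dl ?Phi2_dr mxE;
  case: (A i j) => ????; rewrite /=; ring.
Qed.

Lemma Phi2_1 m : Phi2L (1%:M : 'M[C2]_m) = 1%:M.
Proof.
by apply: eq_blk => i j; rewrite ?Phi2_ul ?Phi2_ur ?Phi2_dl ?Phi2_dr !mxE ?eq_lrshift ?eq_rlshift
  ?eq_shift; case: (i == j); rewrite /=; ring.
Qed.
Lemma mulE (T : pzSemiRingType) p q r (M : 'M[T]_(p, q)) (N : 'M_(q, r)) x y :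
  (M *m N) x y = \sum_k M x k * N k y.
Proof. by rewrite mxE. Qed.

Lemma mulC2E (x y : C2) : x * y = C2mul x y. Proof. by []. Qed.

Lemma Phi2M m n p (A : 'M[C2]_(m, n)) (B : 'M[C2]_(n, p)) :
  Phi2L (A *m B) = Phi2L A *m Phi2L B.
Proof.
have := hi => hi.
apply: eq_blk => i j; rewrite ?Phi2_ul ?Phi2_ur ?Phi2_dl ?Phi2_dr !mulE big_split_ord /=;
  rewrite ?c2_0_sum ?c2_1_sum ?c2_2_sum ?c2_3_sum;
  under [X in _ = X + _]eq_bigr => k _ do rewrite ?Phi2_ul ?Phi2_ur ?Phi2_dl ?Phi2_dr;
  under [X in _ = _ + X]eq_bigr => k _ do rewrite ?Phi2_ul ?Phi2_ur ?Phi2_dl ?Phi2_dr;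
  rewrite mulr_sumr -big_split -?sumrN -big_split /=; apply: eq_bigr => k _;
  rewrite !mulC2E; case: (A i k) => ????; case: (B k j) => ????; rewrite /=; ring: hi.
Qed.
Lemma conj_lin (a b : C) : conjc (a + 'i * b) = conjc a - 'i * conjc b.
Proof.
rewrite -complexiE; case: a => a1 a2; case: b => b1 b2.
apply/eqP; rewrite eq_complex /=; apply/andP; split; apply/eqP; ring.
Qed.
Lemma conj_lin' (a b : C) : conjc (a - 'i * b) = conjc a + 'i * conjc b.
Proof.
rewrite -complexiE; case: a => a1 a2; case: b => b1 b2.
apply/eqP; rewrite eq_complex /=; apply/andP; split; apply/eqP; ring.
Qed.
Lemma conj_opp (a : C) : conjc (- a) = - conjc a.
Proof.
case: a => a1 a2.
apply/eqP; rewrite eq_complex /=; apply/andP; split; apply/eqP; ring.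
Qed.

Lemma ctrE p q (M : 'M[C]_(p, q)) x y : ctrmx M x y = conjc (M y x).
Proof. by rewrite !mxE. Qed.

Lemma sharpE m n (A : 'M[C2]_(m, n)) x y : sharp A x y =
  MkC2 (conjc (c2_0 (A y x))) (- conjc (c2_1 (A y x)))
       (- conjc (c2_2 (A y x))) (- conjc (c2_3 (A y x))).
Proof. by rewrite !mxE. Qed.

Lemma Phi2_sharp m n (A : 'M[C2]_(m, n)) : Phi2L (sharp A) = ctrmx (Phi2L A).
Proof.
by apply: eq_blk => i j; rewrite ctrE ?Phi2_ul ?Phi2_ur ?Phi2_dl ?Phi2_dr sharpE /=
  ?conj_opp ?conj_lin ?conj_lin'; ring.
Qed.
Lemma lmulE (T : pzRingType) p q (M : 'M[T]_(p, q)) a x y : (a%:M *m M) x y = a * M x y.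
Proof. by rewrite mul_scalar_mx mxE. Qed.
Lemma rmulE (T : pzRingType) p q (M : 'M[T]_(p, q)) a x y : (M *m a%:M) x y = M x y * a.
Proof.
rewrite mxE (bigD1 y) //= big1 ?addr0 => [|k /negbTE hk]; rewrite !mxE ?eqxx ?hk ?mulr1n //.
by rewrite mulr0n mulr0.
Qed.

Lemma mapE (T U : Type) p q (f : T -> U) (M : 'M[T]_(p, q)) x y : (map_mx f M) x y = f (M x y).
Proof. by rewrite mxE. Qed.
Lemma oppE (T : zmodType) p q (M : 'M[T]_(p, q)) x y : (- M) x y = - M x y.
Proof. by rewrite mxE. Qed.
Lemma cmpE p q (M : 'M[C2]_(p, q)) x y :
  [/\ cmp0 M x y = c2_0 (M x y), cmp1 M x y = c2_1 (M x y),
      cmp2 M x y = c2_2 (M x y) & cmp3 M x y = c2_3 (M x y)].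
Proof. by rewrite !mxE. Qed.
Lemma recon_entry p q (P Q S T : 'M[C2]_(p, q)) (u v w z : C2) (c : C) i j :
  (scaleC2mx c ((u%:M *m P + v%:M *m S) *m z%:M + (u%:M *m Q + v%:M *m T) *m w%:M)) i j
  = inC2 c * ((u * P i j + v * S i j) * z + (u * Q i j + v * T i j) * w).
Proof. by rewrite mxE !addE !rmulE !addE !lmulE. Qed.

Lemma recon_entry' p q (P Q S T : 'M[C2]_(p, q)) (u v w z : C2) (c : C) i j x y z' t :
  P i j = x -> S i j = z' -> Q i j = y -> T i j = t -> 
  (scaleC2mx c ((u%:M *m P + v%:M *m S) *m z%:M + (u%:M *m Q + v%:M *m T) *m w%:M)) i j
  = inC2 c * ((u * x + v * z') * z + (u * y + v * t) * w).
Proof. by move=> <- <- <- <-; apply: recon_entry. Qed.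

Lemma recon_gen p q (A : 'M[C2]_(p, q)) (u v w z : C2) (c : C) i j :
  (scaleC2mx c ((u%:M *m map_mx (@inC2 R) (cmp0 A + 'i *: cmp1 A)
                 + v%:M *m map_mx (@inC2 R) (cmp2 A - 'i *: cmp3 A)) *m z%:M
              + (u%:M *m map_mx (@inC2 R) (- (cmp2 A + 'i *: cmp3 A))
                 + v%:M *m map_mx (@inC2 R) (cmp0 A - 'i *: cmp1 A)) *m w%:M)) i j
  = inC2 c * ((u * inC2 (c2_0 (A i j) + 'i * c2_1 (A i j))
               + v * inC2 (c2_2 (A i j) - 'i * c2_3 (A i j))) * z
            + (u * inC2 (- (c2_2 (A i j) + 'i * c2_3 (A i j)))
               + v * inC2 (c2_0 (A i j) - 'i * c2_1 (A i j))) * w).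
Proof.
(apply: recon_entry'; by rewrite !mxE).
Qed.

Lemma Phi2_recon m n (A : 'M[C2]_(m, n)) :
 A = scaleC2mx (1 / 4%:R)
            (row_mx ((inC2 1 - inC2 'i%C * e1 R)%:M) ((e2 R + inC2 'i%C * e12 R)%:M)
             *m mxC2 (Phi2L A)
             *m (row_mx ((inC2 1 - inC2 'i%C * e1 R)%:M)
                        ((- e2 R + inC2 'i%C * e12 R)%:M))^T).
Proof.
have := hi => hi.
have h4 : (4%:R : C) != 0 by rewrite pnatr_eq0.
rewrite complexiE /mxC2 Phi2_def map_block_mx mul_row_block tr_row_mx mul_row_col !tr_scalar_mx.
apply/matrixP => i j.
rewrite [RHS]recon_gen.
case: (A i j) => a0 a1 a2 a3; rewrite !mulC2E /=; congr MkC2; by field: hi.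
Qed.

Lemma Phi2_0 m n : Phi2L (0 : 'M[C2]_(m, n)) = 0.
Proof. by apply: eq_blk => i j; rewrite ?Phi2_ul ?Phi2_ur ?Phi2_dl ?Phi2_dr !mxE /=; ring. Qed.

Lemma Phi2_sum m n N (F : 'I_N -> 'M[C2]_(m, n)) :
  Phi2L (\sum_(k < N) F k) = \sum_(k < N) Phi2L (F k).
Proof. exact: (big_morph _ (@Phi2D m n) (@Phi2_0 m n)). Qed.

Lemma Phi2X m (A : 'M[C2]_m) k : Phi2L (A ^+ k) = Phi2L A ^+ k.
Proof.
elim: k => [|k IH]; first by rewrite !expr0 Phi2_1.
by rewrite !exprS -!mulmxE Phi2M IH.
Qed.

Lemma horner_sum n' (M : 'M[C]_n'.+1) (p : {poly C}) :
  horner_mx M p = \sum_(k < size p) p`_k *: M ^+ k.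
Proof.
rewrite -{1}[p]coefK poly_def linear_sum /=; apply: eq_bigr => k _.
by rewrite linearZ /= rmorphXn /= horner_mx_X.
Qed.
End H.

Local Open Scope complex_scope.

Theorem corollary11 (R : realType) :
  (forall (m n p : nat) (A B : 'M[C2 R]_(m, n)) (Cm : 'M[C2 R]_(n, p)) (l : R[i]),
      (* (a) *)
      (A = B <-> Phi2 A = Phi2 B)
      (* (b) *)
   /\ Phi2 (A + B) = Phi2 A + Phi2 B
      (* (c) *)
   /\ Phi2 (A *m Cm) = Phi2 A *m Phi2 Cm
   /\ Phi2 (scaleC2mx l A) = l *: Phi2 A
   /\ Phi2 (1%:M : 'M[C2 R]_m) = 1%:M
      (* (d) *)
   /\ Phi2 (sharp A) = ctrmx (Phi2 A)
      (* (e) *)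
   /\ A = scaleC2mx (1 / 4%:R)
            (row_mx ((inC2 1 - inC2 'i * e1 R)%:M) ((e2 R + inC2 'i * e12 R)%:M)
             *m mxC2 (Phi2 A)
             *m (row_mx ((inC2 1 - inC2 'i * e1 R)%:M)
                        ((- e2 R + inC2 'i * e12 R)%:M))^T))
  /\ (forall (m : nat) (A : 'M[C2 R]_m),
      (* (f) *)
      (C2invertible A <-> Phi2 A \in unitmx)
   /\ (forall X : 'M[C2 R]_m, A *m X = 1%:M -> X *m A = 1%:M ->
         Phi2 X = invmx (Phi2 A))
      (* (g) *)
   /\ C2poly_eval (char_poly (Phi2 A)) A = 0)
  /\ (forall (m : nat) (A B : 'M[C2 R]_m),
      (* (h) *)
      (exists X : 'M[C2 R]_m, C2invertible X /\ A *m X = X *m B)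
      <-> similar_in unitmx (Phi2 A) (Phi2 B)).
Proof.
split; [|split].
- move=> m n p A B Cm l; rewrite -!Phi2LE; split; first by split=> [->|/Phi2_inj].
  do 5 (split; first by rewrite ?Phi2D ?Phi2M ?Phi2Z ?Phi2_1 ?Phi2_sharp).
  exact: Phi2_recon.
- move=> m A; rewrite -!Phi2LE; split; [|split].
  + split=> [[X [h1 h2]]|hu].
      have hAX : Phi2L A *m Phi2L X = 1%:M by rewrite -Phi2M h1 Phi2_1.
      by case: (mulmx1_unit hAX).
    exists (Psi (invmx (Phi2L A))); split; apply: Phi2_inj;
      by rewrite Phi2M Psi_Phi2 Phi2_1 ?mulmxV ?mulVmx.
  + move=> X h1 h2.
    have hAX : Phi2L A *m Phi2L X = 1%:M by rewrite -Phi2M h1 Phi2_1.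
    have [hu _] := mulmx1_unit hAX.
    by rewrite -[Phi2L X](mulKmx hu) hAX mulmx1.
  + case: m A => [|m'] A; first by apply/matrixP => [[]].
    apply: Phi2_inj; rewrite /C2poly_eval Phi2_sum Phi2_0.
    under eq_bigr do rewrite Phi2Z Phi2X.
    rewrite -(@horner_sum R (m' + m'.+1)).
    exact: (@Cayley_Hamilton _ (m' + m'.+1)).
- move=> m A B; rewrite -!Phi2LE; split.
  + move=> [X [[Y [h1 h2]] hAX]].
    have hYX : Phi2L Y *m Phi2L X = 1%:M by rewrite -Phi2M h2 Phi2_1.
    have [hu _] := mulmx1_unit hYX.
    have hinv : invmx (Phi2L Y) = Phi2L X.
      by rewrite -[Phi2L X](mulKmx hu) hYX mulmx1.
    exists (Phi2L Y) => //; rewrite /similar_to /=; apply/eqP.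
    by rewrite /conjmx pinvmxE // hinv -!Phi2M -mulmxA hAX mulmxA h2 mul1mx.
  + move=> [P hu /eqP]; rewrite /conjmx pinvmxE // => hsim.
    exists (Psi (invmx P)); split.
      exists (Psi P); split; apply: Phi2_inj;
        by rewrite Phi2M !Psi_Phi2 Phi2_1 ?mulmxV ?mulVmx.
    apply: Phi2_inj; rewrite !Phi2M Psi_Phi2 -hsim !mulmxA mulVmx // mul1mx.
    done.
Qed.
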